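(* Let $q=p^m$ with $p$ an odd prime, $q\equiv 1\pmod 3$ and $q\geq 13$. Let $\pi,\sigma\in P$. Then $hd(\pi^{\triangle},\sigma^{\triangle})=hd(\pi,\sigma)-3$ if and only if $\pi\sigma$ is an edge of $C_P(q)$.
   Context: $PGL(2,q)$ is the group of maps $x\mapsto\frac{ax+b}{cx+d}$ ($a,b,c,d\in GF(q)$, $ad\neq bc$) acting on $GF(q)\cup\{\infty\}$ with the usual conventions ($-d/c\mapsto\infty$, $\infty\mapsto a/c$ if $c\neq0$, $\infty\mapsto\infty$ if $c=0$). For $K,i\in GF(q)$ and $r\in GF(q)\setminus\{0\}$, $f_{K,r,i}$ is the element of $PGL(2,q)$ with $f_{K,r,i}(x)=K+\frac{r}{x-i}$ for $x\notin\{i,\infty\}$, $f_{K,r,i}(\infty)=K$, $f_{K,r,i}(i)=\infty$; $P$ is the set of all such $f_{K,r,i}$. $hd(\pi,\sigma)$ is the number of points at which $\pi,\sigma$ differ. With distinguished element $F=\infty$, $\pi^{\triangle}$ is the permutation with $\pi^{\triangle}(\pi^{-1}(\infty))=\pi(\infty)$, $\pi^{\triangle}(\infty)=\infty$, $\pi^{\triangle}(x)=\pi(x)$ otherwise. The contraction graph $C_P(q)$ has vertex set $PGL(2,q)$, with distinct $\pi,\sigma$ adjacent iff $hd(\pi^{\triangle},\sigma^{\triangle})=q-4$. *)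

(* Defs.v *)
From HB Require Import structures.
From mathcomp Require Import all_boot all_order all_algebra all_field.
Set Implicit Arguments. Unset Strict Implicit. Unset Printing Implicit Defensive.
Import GRing.Theory.
Local Open Scope ring_scope.

(* The projective line GF(q) ∪ {∞} is [option F]; [None] is ∞. *)

Definition fKri (F : fieldType) (K r i : F) (x : option F) : option F :=
  match x with
  | None => Some K
  | Some y => if y == i then None else Some (K + r / (y - i))
  end.

Definition inP (F : fieldType) (pi : option F -> option F) : Prop :=
  exists K r i : F, r != 0 /\ pi = fKri K r i.

Definition hd (F : finFieldType) (pi sigma : option F -> option F) : nat :=
  #|[pred x : option F | pi x != sigma x]|%N.

Definition contr (F : fieldType) (pi : option F -> option F) (x : option F)
  : option F :=
  match x with
  | None => None
  | Some _ => if pi x == None then pi None else pi x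
  end.

Definition CP_adj (F : finFieldType) (pi sigma : option F -> option F) : Prop :=
  pi <> sigma /\ hd (contr pi) (contr sigma) = (#|F| - 4)%N.

(* Main.v *)
Require Import Defs.
From HB Require Import structures.
From mathcomp Require Import all_boot all_order all_algebra all_field all_fingroup all_solvable.
From mathcomp Require Import ring.
Set Implicit Arguments. Unset Strict Implicit.
Import GRing.Theory FinRing.Theory.
Local Open Scope ring_scope.
From mathcomp Require Import zify.
From Stdlib Require Import Classical.
Lemma cube_root (F : finFieldType) : (#|F| %% 3 = 1)%N ->
  exists c : F, c ^+ 2 + c + 1 = 0 /\ c != 1.
Proof.
move=> h3.
have d3 : (3 %| #|[set: {unit F}]%G|)%N.
  rewrite card_finField_unit.
  have h0 : (0 < #|F|)%N by apply/card_gt0P; exists 0.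
  apply/dvdnP; exists (#|F| %/ 3)%N.
  move: (divn_eq #|F| 3); rewrite h3 => e.
  by rewrite {1}e addn1.
have [x _ ox] := Cauchy (isT : prime 3) d3.
exists (val x).
have x3 : val x ^+ 3 = 1.
  by rewrite -val_unitX -ox expg_order val_unit1.
have x1 : val x != 1.
  apply/eqP => e.
  have : x = 1%g by apply: val_inj; rewrite e val_unit1.
  by move=> ex; move: ox; rewrite ex order1.
split=> //.
have : (val x - 1) * (val x ^+ 2 + val x + 1) = 0.
  have -> : (val x - 1) * (val x ^+ 2 + val x + 1) = val x ^+ 3 - 1 by ring.
  by rewrite x3 subrr.
by move/eqP; rewrite mulf_eq0 subr_eq0 (negbTE x1) /= => /eqP.
Qed.

Lemma agree_root (F : fieldType) (K r i K' r' i' x : F) :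
  fKri K r i (Some x) = fKri K' r' i' (Some x) ->
  (K - K') * x ^+ 2 + (r - r' - (K - K') * (i + i')) * x
    + ((K - K') * i * i' - r * i' + r' * i) = 0.
Proof.
rewrite /fKri.
have -> : (K - K') * x ^+ 2 + (r - r' - (K - K') * (i + i')) * x
    + ((K - K') * i * i' - r * i' + r' * i) =
   (K - K') * (x - i) * (x - i') + r * (x - i') - r' * (x - i) by ring.
case: (eqVneq x i) => hxi; case: (eqVneq x i') => hxi' //.
- by move=> _; subst; ring.
- move=> [e].
  have -> : (K - K') * (x - i) * (x - i') + r * (x - i') - r' * (x - i) =
     (x - i) * (x - i') * ((K + r / (x - i)) - (K' + r' / (x - i'))).
    by field; rewrite !subr_eq0 hxi hxi'.
  by rewrite e subrr mulr0.
Qed.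

Lemma lin2 (F : fieldType) (b c x1 x2 : F) : x1 != x2 ->
  b * x1 + c = 0 -> b * x2 + c = 0 -> b = 0 /\ c = 0.
Proof.
move=> h e1 e2.
have : (x1 - x2) * b = 0.
  have -> : (x1 - x2) * b = (b * x1 + c) - (b * x2 + c) by ring.
  by rewrite e1 e2 subrr.
move/eqP; rewrite mulf_eq0 subr_eq0 (negbTE h) /= => /eqP hb.
by split=> //; move: e1; rewrite hb mul0r add0r.
Qed.

Lemma quad3 (F : fieldType) (a b c x1 x2 x3 : F) :
  x1 != x2 -> x1 != x3 -> x2 != x3 ->
  a * x1 ^+ 2 + b * x1 + c = 0 -> a * x2 ^+ 2 + b * x2 + c = 0 ->
  a * x3 ^+ 2 + b * x3 + c = 0 -> a = 0.
Proof.
move=> h12 h13 h23 e1 e2 e3.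
have k12 : (a * x1 + a * x2 + b) = 0.
  have : (x1 - x2) * (a * x1 + a * x2 + b) = 0.
    have -> : (x1 - x2) * (a * x1 + a * x2 + b) =
      (a * x1 ^+ 2 + b * x1 + c) - (a * x2 ^+ 2 + b * x2 + c) by ring.
    by rewrite e1 e2 subrr.
  by move/eqP; rewrite mulf_eq0 subr_eq0 (negbTE h12) /= => /eqP.
have k13 : (a * x1 + a * x3 + b) = 0.
  have : (x1 - x3) * (a * x1 + a * x3 + b) = 0.
    have -> : (x1 - x3) * (a * x1 + a * x3 + b) =
      (a * x1 ^+ 2 + b * x1 + c) - (a * x3 ^+ 2 + b * x3 + c) by ring.
    by rewrite e1 e3 subrr.
  by move/eqP; rewrite mulf_eq0 subr_eq0 (negbTE h13) /= => /eqP.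
have : (x2 - x3) * a = 0.
  have -> : (x2 - x3) * a = (a * x1 + a * x2 + b) - (a * x1 + a * x3 + b) by ring.
  by rewrite k12 k13 subrr.
by move/eqP; rewrite mulf_eq0 subr_eq0 (negbTE h23) /= => /eqP.
Qed.

Lemma coeffs0 (F : fieldType) (K r i K' r' i' : F) : r != 0 ->
  K - K' = 0 -> r - r' - (K - K') * (i + i') = 0 ->
  (K - K') * i * i' - r * i' + r' * i = 0 ->
  fKri K r i = fKri K' r' i'.
Proof.
move=> hr /eqP; rewrite subr_eq0 => /eqP <-.
rewrite subrr !mul0r subr0 => /eqP; rewrite subr_eq0 => /eqP <-.
rewrite add0r.
have -> : - (r * i') + r * i = r * (i - i') by ring.
by move/eqP; rewrite mulf_eq0 (negbTE hr) subr_eq0 /= => /eqP ->.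
Qed.

Definition ag (F : finFieldType) (f g : option F -> option F) : nat :=
  (\sum_x ((f x == g x) : nat))%N.

Lemma ag_card (F : finFieldType) (f g : option F -> option F) :
  ag f g = #|[pred x | f x == g x]|.
Proof.
rewrite /ag -sum1_card [RHS]big_mkcond /=; apply: eq_bigr => x _.
by rewrite inE; case: (f x == g x).
Qed.

Lemma hd_ag (F : finFieldType) (f g : option F -> option F) :
  (hd f g + ag f g = #|F|.+1)%N.
Proof.
rewrite /hd -card_option -sum1_card [X in (X + _)%N]big_mkcond /ag -big_split /=.
rewrite -sum1_card; apply: eq_bigr => x _; rewrite inE; by case: (f x == g x).
Qed.

Lemma three_elts (T : finType) (A : pred T) : (3 <= #|A|)%N ->
  exists x y z, [/\ x \in A, y \in A, z \in A & [/\ x != y, x != z & y != z]].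
Proof.
move: (enum_uniq A) (mem_enum A); rewrite cardE.
case: (enum A) => [|x [|y [|z s]]] //= + hm _.
rewrite !inE !negb_or => /and4P[/and3P[xy xz _] /andP[yz _] _ _].
exists x, y, z; split; rewrite -?hm ?inE ?eqxx ?orbT //.
Qed.

Lemma ag_le2 (F : finFieldType) (K r i K' r' i' : F) : r != 0 ->
  fKri K r i <> fKri K' r' i' -> (ag (fKri K r i) (fKri K' r' i') <= 2)%N.
Proof.
move=> hr hne; rewrite ag_card leqNgt; apply/negP => h3.
have [x [y [z [hx hy hz [xy xz yz]]]]] := three_elts h3.
set a := K - K'; set b := r - r' - (K - K') * (i + i');
set c := (K - K') * i * i' - r * i' + r' * i.
have rootS : forall u, Some u \in [pred x | fKri K r i x == fKri K' r' i' x] ->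
    a * u ^+ 2 + b * u + c = 0.
  by move=> u; rewrite inE => /eqP; apply: agree_root.
have noneA : None \in [pred x | fKri K r i x == fKri K' r' i' x] -> a = 0.
  by rewrite inE /= => /eqP [e]; rewrite /a e subrr.
have two : forall u v, a = 0 -> u != v ->
    Some u \in [pred x | fKri K r i x == fKri K' r' i' x] ->
    Some v \in [pred x | fKri K r i x == fKri K' r' i' x] -> False.
  move=> u v ha uv hu hv; apply: hne.
  move: (rootS _ hu) (rootS _ hv); rewrite ha !mul0r !add0r => eu ev.
  have [hb hc] := lin2 uv eu ev.
  by apply: coeffs0.
move: x y z hx hy hz xy xz yz => [x|] [y|] [z|] //= hx hy hz xy xz yz.
- apply: (two x y _ xy hx hy).
  exact: (quad3 xy xz yz (rootS _ hx) (rootS _ hy) (rootS _ hz)).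
- exact: (two x y (noneA hz) xy hx hy).
- exact: (two x z (noneA hy) xz hx hz).
- exact: (two y z (noneA hx) yz hy hz).
Qed.

Lemma contr_out (F : fieldType) (K r i y : F) : y != i ->
  contr (fKri K r i) (Some y) = fKri K r i (Some y).
Proof. by move=> h; rewrite /contr /= (negbTE h). Qed.

Lemma contr_in (F : fieldType) (K r i : F) :
  contr (fKri K r i) (Some i) = Some K.
Proof. by rewrite /contr /= eqxx. Qed.

Lemma decomp_neq (F : finFieldType) (K r i K' r' i' : F) : i != i' ->
  (ag (contr (fKri K r i)) (contr (fKri K' r' i')) + (K == K')
   = ag (fKri K r i) (fKri K' r' i') + 1 + (Some K == fKri K' r' i' (Some i))
     + (fKri K r i (Some i') == Some K'))%N.
Proof.
move=> hii.
rewrite /ag (bigD1 None) //= (bigD1 (Some i)) //= (bigD1 (Some i')) /=; last first.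
  by rewrite eq_sym hii.
rewrite [in RHS](bigD1 None) //= [in RHS](bigD1 (Some i)) //= [in RHS](bigD1 (Some i')) /=; last first.
  by rewrite eq_sym hii.
rewrite !eqxx (negbTE hii) (eq_sym i' i) (negbTE hii) /=.
rewrite (eq_bigr (fun x => (fKri K r i x == fKri K' r' i' x) : nat)); last first.
  move=> [y|] //= /andP[hy1 hy2].
  have h1 : y != i by apply: contraNneq hy1 => ->.
  have h2 : y != i' by apply: contraNneq hy2 => ->.
  by rewrite (negbTE h1) (negbTE h2).
have -> : (Some K == Some K') = (K == K') by [].
set S := (\sum_(_ | _) _)%N.
set e1 := (Some K == _ : nat).
set e2 := (_ == Some K' : nat).
rewrite !add0n; ring.
Qed.

Lemma decomp_eq (F : finFieldType) (K r i K' r' : F) :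
  ag (contr (fKri K r i)) (contr (fKri K' r' i)) = ag (fKri K r i) (fKri K' r' i).
Proof.
rewrite /ag (bigD1 None) //= (bigD1 (Some i)) //=.
rewrite [in RHS](bigD1 None) //= [in RHS](bigD1 (Some i)) //=.
rewrite !eqxx /=.
rewrite (eq_bigr (fun x => (fKri K r i x == fKri K' r' i x) : nat)); last first.
  move=> [y|] //= hy2.
  have h1 : y != i by apply: contraNneq hy2 => ->.
  by rewrite (negbTE h1).
have -> : (Some K == Some K') = (K == K') by [].
set S := (\sum_(_ | _) _)%N.
ring.
Qed.

Lemma ag_ge2 (F : finFieldType) (c K r i K' r' i' : F) :
  c ^+ 2 + c + 1 = 0 -> c != 1 -> i != i' ->
  fKri K' r' i' (Some i) = Some K -> fKri K r i (Some i') = Some K' ->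
  (2 <= ag (fKri K r i) (fKri K' r' i'))%N.
Proof.
move=> hc c1 hii e1 e2.
have hd : i - i' != 0 by rewrite subr_eq0.
have hd' : i' - i != 0 by rewrite subr_eq0 eq_sym.
move: e1; rewrite /= (negbTE hii) => -[e1].
move: e2; rewrite /= eq_sym (negbTE hii) => -[e2].
have hr' : r' = (i - i') * (K - K') by rewrite -e1; field.
have hr : r = (i - i') * (K - K').
  rewrite -e2; have -> : i - i' = - (i' - i) by rewrite opprB.
  by field.
have key : forall y, y ^+ 2 - (i - i') * y + (i - i') ^+ 2 = 0 ->
    fKri K r i (Some (i' + y)) = fKri K' r' i' (Some (i' + y)).
  move=> y hy.
  have y0 : y != 0.
    apply/eqP => e; move: hy; rewrite e expr0n /= mulr0 subr0 add0r => /eqP.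
    by rewrite expf_eq0 /= (negbTE hd).
  have yd : y - (i - i') != 0.
    apply/eqP => /eqP; rewrite subr_eq0 => /eqP e; move: hy.
    rewrite e -expr2 subrr add0r => /eqP.
    by rewrite expf_eq0 /= (negbTE hd).
  have h1 : i' + y - i != 0.
    by have -> : i' + y - i = y - (i - i') by ring.
  have h2 : i' + y - i' != 0.
    by have -> : i' + y - i' = y by ring.
  rewrite /=.
  have -> : (i' + y == i) = false.
    by apply/negbTE; apply: contra h1 => /eqP ->; rewrite subrr.
  have -> : (i' + y == i') = false.
    by apply/negbTE; apply: contra h2 => /eqP ->; rewrite subrr.
  congr Some; apply/eqP; rewrite -subr_eq0 hr hr'.
  have -> : K + (i - i') * (K - K') / (i' + y - i) -
       (K' + (i - i') * (K - K') / (i' + y - i')) =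
       (K - K') * (y ^+ 2 - (i - i') * y + (i - i') ^+ 2) / (y * (y - (i - i'))).
    by field; rewrite ?y0 ?yd ?h1 ?h2.
  by rewrite hy mulr0 mul0r.
set y1 := - (c * (i - i')); set y2 := - (c ^+ 2 * (i - i')).
have hy1 : y1 ^+ 2 - (i - i') * y1 + (i - i') ^+ 2 = 0.
  have -> : y1 ^+ 2 - (i - i') * y1 + (i - i') ^+ 2 =
    (i - i') ^+ 2 * (c ^+ 2 + c + 1) by rewrite /y1; ring.
  by rewrite hc mulr0.
have hy2 : y2 ^+ 2 - (i - i') * y2 + (i - i') ^+ 2 = 0.
  have -> : y2 ^+ 2 - (i - i') * y2 + (i - i') ^+ 2 =
    (i - i') ^+ 2 * (c ^+ 2 + c + 1) * (c ^+ 2 - c + 1) by rewrite /y2; ring.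
  by rewrite hc mulr0 mul0r.
have c0 : c != 0.
  by apply/eqP => e; move: hc; rewrite e expr0n /= !add0r => /eqP; rewrite oner_eq0.
have y12 : Some (i' + y1) != Some (i' + y2).
  apply/negP => /eqP [e].
  have : (i - i') * c * (c - 1) = 0.
    have -> : (i - i') * c * (c - 1) = (i' + y1) - (i' + y2) by rewrite /y1 /y2; ring.
    by rewrite e subrr.
  by move/eqP; rewrite !mulf_eq0 (negbTE hd) (negbTE c0) subr_eq0 (negbTE c1).
rewrite ag_card; apply: leq_trans (subset_leq_card (_ : [set Some (i' + y1); Some (i' + y2)] \subset _)).
  by rewrite cards2 y12.
apply/subsetP => z; rewrite !inE => /orP[] /eqP ->; apply/eqP; exact: key.
Qed.
Theorem lemma11 (F : finFieldType) (p m : nat)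
  (hp : prime p) (hodd : odd p) (hq : #|F| = (p ^ m)%N)
  (h3 : (#|F| %% 3 = 1)%N) (h13 : (13 <= #|F|)%N)
  (pi sigma : option F -> option F) (hpi : inP pi) (hsigma : inP sigma) :
  (hd (contr pi) (contr sigma) + 3)%N = hd pi sigma <-> CP_adj pi sigma.
Proof.
move: hpi hsigma => [K [r [i [hr ->]]]] [K' [r' [i' [hr' ->]]]].
rewrite /CP_adj.
have HA : (hd (fKri K r i) (fKri K' r' i') + ag (fKri K r i) (fKri K' r' i')
   = #|F|.+1)%N := hd_ag _ _.
have HC : (hd (contr (fKri K r i)) (contr (fKri K' r' i'))
   + ag (contr (fKri K r i)) (contr (fKri K' r' i')) = #|F|.+1)%N := hd_ag _ _.
destruct (classic (fKri K r i = fKri K' r' i')) as [e|ne].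
  rewrite -e.
  have h0 : hd (fKri K r i) (fKri K r i) = 0%N.
    by apply: eq_card0 => x; rewrite !inE eqxx.
  rewrite h0; split=> [|[]] //; lia.
have le2 := ag_le2 hr ne.
case: (eqVneq i i') => hii.
  subst i'.
  have E := decomp_eq K r i K' r'.
  split; [move=> h | move=> [_ h]]; exfalso; lia.
have E := decomp_neq K r K' r' hii.
move: E.
case e0: (K == K'); case e1: (Some K == fKri K' r' i' (Some i));
  case e2: (fKri K r i (Some i') == Some K') => /= E;
  split.
all: try (move=> h; exfalso; lia).
all: try (move=> [_ h];
  have h' : (hd (contr (fKri K r i)) (contr (fKri K' r' i')) = #|F| - 4)%N := h;
  lia).
move=> h; split=> //.
suff : (hd (contr (fKri K r i)) (contr (fKri K' r' i')) = #|F| - 4)%N by [].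
have [c [hc c1]] := cube_root h3.
have := ag_ge2 hc c1 hii (esym (eqP e1)) (eqP e2).
lia.
Qed.
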